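(* Let $s,t\in\Sigma^n$ and let $d:\Sigma^n\to\Sigma$ be a depth assignment such that $d_s=d_t$, or $s$ and $t$ share at least one symbol. Then \[D\left(P\left(H(s)+e_{d_s}\right)-P\left(H(t)+e_{d_t}\right)\right)\le n.\]
   Context: Let $k\ge 1$ be an integer, $\Sigma=\{0,1,\dots,k-1\}$, $n\ge 1$. A depth assignment is any function $d:\Sigma^n\to\Sigma$, written $s\mapsto d_s$. The histogram $H(s):\Sigma\to\mathbb{Z}$ of a string $s$ gives the number of occurrences of each symbol in $s$; $e_b$ is the indicator function of $b\in\Sigma$. For $H:\Sigma\to\mathbb{Z}$, the partial sum is $P(H)(i)=\sum_{j=0}^{i}H(j)$ and the difference is $D(H)=\max_{i,j\in\Sigma}(H(i)-H(j))$. ''Share a symbol'' means some $c\in\Sigma$ occurs in both $s$ and $t$. *)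

(* Defs.v *)
From mathcomp Require Import all_boot all_order all_algebra.
Set Implicit Arguments. Unset Strict Implicit. Unset Printing Implicit Defensive.
Import Order.TTheory GRing.Theory Num.Theory.
Local Open Scope ring_scope.

(* Alphabet Sigma = 'I_k = {0,...,k-1}; strings of length n are n.-tuple 'I_k. *)

Definition hist (k n : nat) (s : n.-tuple 'I_k) : 'I_k -> int :=
  fun c => (count_mem c s)%:Z.

Definition ind (k : nat) (b : 'I_k) : 'I_k -> int :=
  fun c => (c == b)%:Z.

Definition fadd (k : nat) (f g : 'I_k -> int) : 'I_k -> int := fun c => f c + g c.
Definition fsub (k : nat) (f g : 'I_k -> int) : 'I_k -> int := fun c => f c - g c.

Definition psum (k : nat) (f : 'I_k -> int) : 'I_k -> int :=
  fun i => \sum_(j < k | (j <= i)%N) f j.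

(* Difference D(H) = max_{i,j} (H(i) - H(j)).  The fold starts at 0, which is
   harmless since the pair (i,i) contributes 0 and Sigma is nonempty (k >= 1). *)
Definition Ddiff (k : nat) (f : 'I_k -> int) : int :=
  \big[Num.max/0]_(ij : 'I_k * 'I_k) (f ij.1 - f ij.2).

Definition share_symbol (k n : nat) (s t : n.-tuple 'I_k) : Prop :=
  exists c : 'I_k, c \in s /\ c \in t.

(* Main.v *)
Require Import Defs.
From mathcomp Require Import all_boot all_order all_algebra.
From mathcomp Require Import zify.
Import Order.TTheory GRing.Theory Num.Theory.
Local Open Scope ring_scope.

Lemma sum_ind_pred (k : nat) (P : pred 'I_k) (a : 'I_k) :
  \sum_(j < k | P j) ((a == j)%:Z) = (P a)%:Z.
Proof.
case Pa: (P a).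
  rewrite (bigD1 a) //= eqxx big1 ?addr0 // => j /andP[_ /negbTE].
  by rewrite eq_sym => ->.
rewrite big1 // => j Pj; case: eqP => // e; subst.
by rewrite Pj in Pa.
Qed.

Lemma sum_count (k : nat) (P : pred 'I_k) (s : seq 'I_k) :
  \sum_(j < k | P j) ((count_mem j s)%:Z) = (count P s)%:Z.
Proof.
elim: s => [|a s IH] /=; first by rewrite big1.
under eq_bigr => j _ do rewrite PoszD.
by rewrite big_split /= IH sum_ind_pred PoszD.
Qed.

Lemma psumE (k n : nat) (s : n.-tuple 'I_k) (b i : 'I_k) :
  psum (fadd (hist s) (ind b)) i = Posz (count (fun c : 'I_k => (c <= i)%N) s + (b <= i))%N.
Proof.
rewrite /psum /fadd big_split /= PoszD.
rewrite /hist sum_count; congr (_ + _).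
rewrite /ind -(@sum_ind_pred k (fun c : 'I_k => (c <= i)%N) b).
by apply: eq_bigr => j _; rewrite eq_sym.
Qed.

Lemma count_split (k : nat) (s : seq 'I_k) (i j : 'I_k) : (j <= i)%N ->
  count (fun c : 'I_k => (c <= i)%N) s =
  (count (fun c : 'I_k => (c <= j)%N) s + count (fun c : 'I_k => (j < c)%N && (c <= i)%N) s)%N.
Proof.
move=> ji; elim: s => [|a s IH] //=; rewrite IH.
case: (leqP a j) => aj; case: (leqP a i) => ai /=; lia.
Qed.

Lemma key (k n : nat) (d : n.-tuple 'I_k -> 'I_k) (s t : n.-tuple 'I_k) (p : pred 'I_k) :
  d s = d t \/ share_symbol s t ->
  (count p s + p (d s) <= n + (count p t + p (d t)))%N.
Proof.
move=> H.
have cs : (count p s <= n)%N by have := count_size p s; rewrite size_tuple.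
case: (ltnP (count p s) n) => c1; first by case: (p (d s)); lia.
have ce : count p s = n by lia.
case pds: (p (d s)); last by lia.
case: H => [e|[c [cs' ct]]]; first by rewrite -e pds; lia.
have /allP ap : all p s by rewrite all_count size_tuple ce.
have : has p t by apply/hasP; exists c => //; apply: ap.
rewrite has_count; lia.
Qed.

Theorem lemma8 (k n : nat) (hk : (1 <= k)%N) (hn : (1 <= n)%N)
  (d : n.-tuple 'I_k -> 'I_k) (s t : n.-tuple 'I_k) :
  d s = d t \/ share_symbol s t ->
  Ddiff (fsub (psum (fadd (hist s) (ind (d s))))
              (psum (fadd (hist t) (ind (d t))))) <= n%:Z.
Proof.
move=> H.
have H' : d t = d s \/ share_symbol t s.
  by case: H => [->|[c [a b]]]; [left|right; exists c].
rewrite /Ddiff; apply: bigmax_le => // [[i j]] _ /=.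
rewrite /fsub !psumE.
case: (leqP j i) => ji.
  rewrite (@count_split k s i j ji) (@count_split k t i j ji).
  have := @key k n d s t (fun c : 'I_k => (j < c)%N && (c <= i)%N) H.
  rewrite /=.
  case: (leqP (d s) j) => h1; case: (leqP (d s) i) => h2;
  case: (leqP (d t) j) => h3; case: (leqP (d t) i) => h4 /=; lia.
have ij : (i <= j)%N by apply: ltnW.
rewrite (@count_split k s j i ij) (@count_split k t j i ij).
have := @key k n d t s (fun c : 'I_k => (i < c)%N && (c <= j)%N) H'.
rewrite /=.
case: (leqP (d s) j) => h1; case: (leqP (d s) i) => h2;
case: (leqP (d t) j) => h3; case: (leqP (d t) i) => h4 /=; lia.
Qed.
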